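(* Let $F:\mathbb{R}\to[0,1]$ be a distribution function with Lebesgue–Stieltjes measure $\mu_F$, let $0<\lambda\le1$ and $\alpha\in(0,1)$, and put $\xi=F^{\wedge}(\alpha)$, $\eta=F^{\vee}(\alpha)$. Then $A^{+}_{\lambda,\alpha}=\{x\in\mathbb{R}:x>\xi,\ F_\lambda(x)\le\alpha\}$ is a Borel set and $\mu_F(A^{+}_{\lambda,\alpha})=0$. In particular, if $\xi<\eta$, then $\mu_F(\{x\in\mathbb{R}:F(x)=\alpha\})=\Delta F(\xi)=\alpha-F(\xi-)$.
   Context: A distribution function is a non-decreasing, right-continuous $F:\mathbb{R}\to[0,1]$ with limits $0$ at $-\infty$ and $1$ at $+\infty$. $\mu_F$ is the unique Borel measure on $\mathbb{R}$ with $\mu_F((x,y])=F(y)-F(x)$. $F(x-)=\lim_{z\uparrow x}F(z)$, $\Delta F(x)=F(x)-F(x-)$, $F_\lambda(x)=F(x-)+\lambda\Delta F(x)$. $F^{\wedge}(\alpha)=\inf\{x:F(x)\ge\alpha\}$, $F^{\vee}(\alpha)=\inf\{x:F(x)>\alpha\}$. *)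

(* Defs.v *)
From HB Require Import structures.
From mathcomp Require Import all_boot all_order all_algebra.
From mathcomp Require Import all_classical all_reals all_analysis.
Set Implicit Arguments. Unset Strict Implicit. Unset Printing Implicit Defensive.
Import Order.TTheory GRing.Theory Num.Theory.
Import numFieldNormedType.Exports.
Local Open Scope classical_set_scope.
Local Open Scope ring_scope.

Definition distribution_function (R : realType) (F : R -> R) : Prop :=
  [/\ (forall x y, x <= y -> F x <= F y),
      (forall x, (F y @[y --> x^'+]) --> F x),
      (forall x, 0 <= F x <= 1),
      ((F x @[x --> -oo]) --> (0:R))
    & ((F x @[x --> +oo]) --> (1:R))].

(* mu is the Lebesgue-Stieltjes measure of F : mu((x,y]) = F y - F x
   (a Borel measure on R; such a measure is unique). *)
Definition is_LS_measure (R : realType) (F : R -> R)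
    (mu : {measure set (measurableTypeR R) -> \bar R}) : Prop :=
  forall x y : R, x <= y -> mu [set` `]x, y]] = (F y - F x)%:E.

Definition Fminus (R : realType) (F : R -> R) (x : R) : R :=
  lim (F y @[y --> x^'-]).

Definition DeltaF (R : realType) (F : R -> R) (x : R) : R :=
  F x - Fminus F x.

Definition Flam (R : realType) (F : R -> R) (lambda x : R) : R :=
  Fminus F x + lambda * DeltaF F x.

Definition Fwedge (R : realType) (F : R -> R) (alpha : R) : R :=
  inf [set x | alpha <= F x].

Definition Fvee (R : realType) (F : R -> R) (alpha : R) : R :=
  inf [set x | alpha < F x].

Definition Aplus (R : realType) (F : R -> R) (lambda alpha : R)
  : set (measurableTypeR R) :=
  [set x | Fwedge F alpha < x /\ Flam F lambda x <= alpha].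

(* Main.v *)
Require Import Defs.
From HB Require Import structures.
From mathcomp Require Import all_boot all_order all_algebra.
From mathcomp Require Import all_classical all_reals all_analysis.
From mathcomp Require Import lra measurable_realfun.
Import Order.TTheory GRing.Theory Num.Theory.
Import numFieldNormedType.Exports.
Local Open Scope classical_set_scope.
Local Open Scope ring_scope.

Lemma small_inv (R : realType) (e : R) : 0 < e -> exists n : nat, n.+1%:R^-1 < e.
Proof.
move=> e0; exists (Num.Def.trunc e^-1).
rewrite -[X in _ < X](invrK e) ltf_pV2 ?posrE ?invr_gt0 //; exact: truncnS_gt.
Qed.

Theorem mainTheorem5 (R : realType) (F : R -> R)
    (mu : {measure set (measurableTypeR R) -> \bar R})
    (lambda alpha : R) :
  distribution_function F -> is_LS_measure F mu ->
  0 < lambda <= 1 -> 0 < alpha < 1 ->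
  let xi := Fwedge F alpha in
  let eta := Fvee F alpha in
  [/\ measurable (Aplus F lambda alpha),
      mu (Aplus F lambda alpha) = 0%E
    & xi < eta ->
      mu [set x : measurableTypeR R | F x = alpha] = (DeltaF F xi)%:E /\
      DeltaF F xi = alpha - Fminus F xi].
Proof.
move=> [ndF rcF F01 Fmo Fpo] LS /andP[l0 l1] /andP[a0 a1] xi eta.
have [M HM] : exists M, forall x, x < M -> F x < alpha.
  have := cvgr_lt _ Fmo _ a0 => -[M [_ HM]]; by exists M.
have [N HN] : exists N, alpha < F N.
  have := cvgr_gt _ Fpo _ a1 => -[M0 [_ HM0]]; exists (M0 + 1); apply: HM0; lra.
pose S := [set x | alpha <= F x].
pose T := [set x | alpha < F x].
have lbS : has_lbound S.
  exists M => x; rewrite /S /T /= => Sx; rewrite leNgt; apply/negP => /HM; lra.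
have lbT : has_lbound T.
  exists M => x; rewrite /S /T /= => Sx; rewrite leNgt; apply/negP => /HM; lra.
have neT : T !=set0 by exists N.
have neS : S !=set0 by exists N; rewrite /S /=; lra.
have xilt x : x < xi -> F x < alpha.
  move=> xxi; rewrite ltNge; apply/negP => Sx.
  have := ge_inf lbS Sx; rewrite -/(Fwedge F alpha) -/xi; lra.
have etale x : x < eta -> F x <= alpha.
  move=> xe; rewrite leNgt; apply/negP => Tx.
  have := ge_inf lbT Tx; rewrite -/(Fvee F alpha) -/eta; lra.
have etagt x : eta < x -> alpha < F x.
  move=> ex; have [t Tt tx] := inf_lt neT ex.
  have := ndF _ _ (ltW tx); rewrite /T /= in Tt; lra.
have Fxi : alpha <= F xi.
  rewrite -(cvg_lim _ (rcF xi)) //; apply: limr_ge; first by apply/cvg_ex; exists (F xi); exact: rcF.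
  near=> y; have xy : xi < y by near: y; exact: nbhs_right_gt.
  have [s Ss sy] := inf_lt neS xy.
  have := ndF _ _ (ltW sy); rewrite /S /= in Ss; lra.
have cvgm x : cvg (F y @[y --> x^'-]).
  apply: nondecreasing_at_left_is_cvgr.
  - by near=> z => a b _ _ ab; exact: ndF.
  - near=> z; exists (F x) => _ [y /= yin <-]; apply: ndF.
    by move: yin; rewrite in_itv/= => /andP[_ /ltW].
have Fm_le x : Fminus F x <= F x.
  apply: limr_le => //; near=> y; apply: ndF; near: y; exact: nbhs_left_le.
have Fm_ge z x : z < x -> F z <= Fminus F x.
  move=> zx; apply: limr_ge => //; near=> y; apply: ndF; near: y; exact: nbhs_left_ge.
have AE : Aplus F lambda alpha = [set x | xi < x /\ F x = alpha].
  rewrite /Aplus; apply/seteqP; split => x [xx]; rewrite /Flam /DeltaF.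
  - move=> H; split => //; have h1 := Fm_ge _ _ xx; have h2 := Fm_le x.
    set m := Fminus F x in H h1 h2 *.
    apply/eqP; rewrite eq_le; apply/andP; split; nra.
  - move=> Fxa; have h1 := Fm_ge _ _ xx; have h2 := Fm_le x.
    rewrite /=; split => //.
    set m := Fminus F x in h1 h2 *.
    have -> : m = alpha by lra.
    by rewrite Fxa subrr mulr0 addr0.
have mA : measurable (Aplus F lambda alpha).
  rewrite AE.
  have -> : [set x | xi < x /\ F x = alpha] =
     `]xi, +oo[ `&` (setT `&` F @^-1` [set alpha]).
    apply/seteqP; split => x /=; rewrite in_itv /= andbT; [by move=> [? ?]|by move=> [? [_ ?]]].
  apply: measurableI; first exact: measurable_itv.
  apply: (nondecreasing_measurable measurableT ndF) => //; exact: measurable_set1.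
have L0 z : z < eta -> mu [set` `]xi, z]] = 0%E.
  move=> ze; have [zxi|xiz] := leP z xi.
    by rewrite set_itv_ge ?measure0// bnd_simp -leNgt.
  rewrite LS ?ltW //.
  have -> : F z - F xi = 0.
    have := ndF _ _ (ltW xiz); have := etale _ ze; lra.
  by [].
have A0 : mu (Aplus F lambda alpha) = 0%E.
  have [etaA|etaA] := pselect (Aplus F lambda alpha eta).
    have [xie Fe] : xi < eta /\ F eta = alpha by rewrite AE in etaA.
    have sub : Aplus F lambda alpha `<=` [set` `]xi, eta]].
      rewrite AE => x [xx Fx]; rewrite /= in_itv /= xx /= leNgt.
      by apply/negP => /etagt; lra.
    have E := (LS xi eta (ltW xie)).
    have h : (mu (Aplus F lambda alpha) <= (F eta - F xi)%:E)%E.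
      rewrite -E; apply: le_measure; [exact: mem_set|apply: mem_set; exact: measurable_itv| exact: sub].
    move: h.
    have -> : F eta - F xi = 0 by have := ndF _ _ (ltW xie); lra.
    by move=> h; apply/eqP; rewrite eq_le h measure_ge0.
  apply/negligibleP => //.
  apply: (negligibleS _ (negligible_bigcup (F:= fun n => ([set` `]xi, eta - n.+1%:R^-1]] : set (measurableTypeR R))) _)).
    rewrite AE => x [xx Fx].
    have xe : x < eta.
      rewrite lt_neqAle; apply/andP; split.
        apply/negP => /eqP exe; apply: etaA; rewrite AE /=; by rewrite -exe.
      by rewrite leNgt; apply/negP => /etagt; lra.
    have [n hn] : exists n : nat, n.+1%:R^-1 < eta - x by apply: small_inv; lra.
    exists n => //; rewrite /= in_itv /= xx /=. have := lerB (lexx eta) (ltW hn); by rewrite opprB addrC subrK.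
  move=> n; apply/negligibleP; first exact: measurable_itv.
  apply: L0; have : 0 < n.+1%:R^-1 :> R by rewrite invr_gt0.
  move: (n.+1%:R^-1 : R) => a; lra.
split => // xieta.
have Fxi_eq : F xi = alpha by have := etale _ xieta; lra.
have SE : [set x : measurableTypeR R | F x = alpha] = [set xi] `|` Aplus F lambda alpha.
  rewrite AE; apply/seteqP; split => x /=.
    move=> Fx; have [xx|xx|xx] := ltgtP x xi.
    - by have := xilt _ xx; lra.
    - by right.
    - by left.
  by move=> [->|[]].
have single : mu [set xi] = (F xi - Fminus F xi)%:E.
  pose u n := xi - n.+1%:R^-1.
  have ult n : u n < xi.
    rewrite /u; have : 0 < n.+1%:R^-1 :> R by rewrite invr_gt0.
    move: (n.+1%:R^-1 : R) => a; lra.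
  pose G n : set (measurableTypeR R) := [set` `]u n, xi]].
  have hcap : \bigcap_n G n = [set xi].
    apply/seteqP; split => x /=.
      move=> hx; have := hx 0%N I; rewrite /G /= in_itv /= => /andP[_ xle].
      apply/eqP; rewrite eq_le xle /=; rewrite leNgt; apply/negP => xlt.
      have [n hn] : exists n : nat, n.+1%:R^-1 < xi - x by apply: small_inv; lra.
      have := hx n I; rewrite /G /= in_itv /= /u => /andP[h _].
      move: hn h; move: (n.+1%:R^-1 : R) => a; lra.
    move=> -> n _; rewrite /G /= in_itv /= lexx andbT; exact: ult.
  have h1 : mu \o G @ \oo --> mu [set xi].
    rewrite -hcap; apply: nonincreasing_cvg_mu.
    - rewrite /G LS; [exact: ltey | exact: ltW].
    - move=> n; exact: measurable_itv.
    - by rewrite hcap.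
    - move=> n m nm; apply/subsetPset => x; rewrite /G /= !in_itv /= => /andP[h1 h2]; rewrite h2 andbT.
      apply: le_lt_trans h1; rewrite /u lerB // lef_pV2 ?posrE // ler_nat; exact: nm.
  have h2 : mu \o G @ \oo --> (F xi - Fminus F xi)%:E.
    have -> : mu \o G = fun n => (F xi - F (u n))%:E.
      by apply: funext => n; rewrite /= /G LS //; exact: ltW.
    apply: cvg_EFin; first exact: nearW.
    apply: cvgB; first exact: cvg_cst.
    apply: (proj1 (cvg_at_leftP F xi (Fminus F xi)) (cvgm xi)); split => //.
    rewrite -[X in _ --> X]subr0; apply: cvgB; first exact: cvg_cst.
    exact: cvg_harmonic.
  exact: (cvg_unique _ h1 h2).
split; last by rewrite /DeltaF Fxi_eq.
have disj : [set xi] `&` Aplus F lambda alpha = set0.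
  apply/seteqP; split => x // [/= ->]; by rewrite AE /= => -[]; rewrite ltxx.
have mU : mu ([set xi] `|` Aplus F lambda alpha) = (mu [set xi] + mu (Aplus F lambda alpha))%E.
  rewrite measureU //; exact: disj.
by rewrite SE mU A0 adde0 single.
Unshelve. all: by end_near.
Qed.
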